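(* Let $\mathcal{T}_1,\mathcal{T}_2$ be locally finite trees in which every vertex has degree at least $3$, with base vertices $o^1,o^2$ and geodesic rays $\gamma^1\in\partial\mathcal{T}_1$, $\gamma^2\in\partial\mathcal{T}_2$. Then the Busemann compactification of the horospheric product $\mathcal{T}_1\uparrow\downarrow\mathcal{T}_2$ is isomorphic (as a compactification) to its height compactification. That is, there is a homeomorphism $\Theta$ from the height compactification onto the Busemann compactification with $\Theta(\Psi(\mathbf{x}))=\Phi(\mathbf{x})$ for every vertex $\mathbf{x}$ of $\mathcal{T}_1\uparrow\downarrow\mathcal{T}_2$. Equivalently, a sequence $(\mathbf{x}_n)$ of vertices of $\mathcal{T}_1\uparrow\downarrow\mathcal{T}_2$ has $\Psi(\mathbf{x}_n)$ convergent in the height compactification if and only if $\Phi(\mathbf{x}_n)$ converges in the Busemann compactification.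
   Context: For a locally finite tree $\mathcal{T}$ with graph metric $d$ and base vertex $o$: the geometric boundary $\partial\mathcal{T}$ is the set of infinite geodesic rays from $o$, i.e. sequences $(z_n)_{n\ge0}$ of vertices with $z_0=o$, $z_i,z_{i+1}$ adjacent, and $z_i,z_{i+1},z_{i+2}$ pairwise distinct. For a vertex $x$ and $\xi=(z_n)\in\partial\mathcal{T}$, $[o,x]_\xi$ denotes the vertex of $\xi$ lying on the geodesic $[o,x]$ that is farthest from $o$. The geometric compactification $\overline{\mathcal{T}}=\mathcal{T}\sqcup\partial\mathcal{T}$ has the following topology: vertices are isolated; a sequence of vertices $x_n$ converges to $\xi\in\partial\mathcal{T}$ iff $d(o,[o,x_n]_\xi)\to\infty$; $\partial\mathcal{T}$ carries the metric $2^{-N(\xi_1,\xi_2)}$, where $N(\xi_1,\xi_2)$ is the length of the common initial segment of $\xi_1,\xi_2$. For $\gamma\in\partial\mathcal{T}$ the height (Busemann) function is $\mathfrak{b}_\gamma(y)=d(y,[o,y]_\gamma)-d(o,[o,y]_\gamma)$. Horospheric product: given $(\mathcal{T}_i,o^i,\gamma^i)$, $i=1,2$, let $\mathfrak{h}_i=\mathfrak{b}_{\gamma^i}$ (height in $\mathcal{T}_i$ with base $o^i$). $\mathcal{T}_1\uparrow\downarrow\mathcal{T}_2$ is the graph with vertex set $\{(x^1,x^2)\in\mathcal{T}_1\times\mathcal{T}_2:\mathfrak{h}_1(x^1)+\mathfrak{h}_2(x^2)=0\}$, where $(x^1,x^2)$ and $(y^1,y^2)$ are adjacent iff $x^1\sim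 y^1$ in $\mathcal{T}_1$ and $x^2\sim y^2$ in $\mathcal{T}_2$; $d$ is its graph metric and $\mathbf{o}=(o^1,o^2)$. Busemann compactification: for a vertex $\mathbf{z}$ let $\mathfrak{b}_{\mathbf{z}}(\mathbf{y})=d(\mathbf{z},\mathbf{y})-d(\mathbf{z},\mathbf{o})$, and $\Phi(\mathbf{z})=\mathfrak{b}_{\mathbf{z}}$; the Busemann compactification is the closure of $\Phi(\mathcal{T}_1\uparrow\downarrow\mathcal{T}_2)$ in the space of real functions on the vertex set with the topology of pointwise convergence. Height compactification: let $\overline{\mathbb{Z}}=\mathbb{Z}\cup\{\pm\infty\}$ be the two-point compactification of $\mathbb{Z}$, and $\Psi(\mathbf{x})=(x^1,x^2,\mathfrak{h}_1(x^1))\in\overline{\mathcal{T}}_1\times\overline{\mathcal{T}}_2\times\overline{\mathbb{Z}}$; the height compactification is the closure of $\Psi(\mathcal{T}_1\uparrow\downarrow\mathcal{T}_2)$ in this product space. *)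

(* Defs.v *)
From Stdlib Require Import List ZArith Reals ClassicalEpsilon.
Import ListNotations.

(* [walk adj x l y] : x, l_1, ..., l_k is a walk whose last vertex is y
   (length k = length l). *)
Fixpoint walk {V : Type} (adj : V -> V -> Prop) (x : V) (l : list V) (y : V)
  : Prop :=
  match l with
  | [] => x = y
  | z :: l' => adj x z /\ walk adj z l' y
  end.

(* Graph metric: the least length of a walk from x to y
   (default value if x,y are not connected; never used for connected graphs). *)
Definition gdist {V : Type} (adj : V -> V -> Prop) (x y : V) : nat :=
  epsilon (inhabits 0%nat)
    (fun n => (exists l, walk adj x l y /\ length l = n) /\
              forall l, walk adj x l y -> (n <= length l)%nat).

Definition is_tree {V : Type} (adj : V -> V -> Prop) : Prop :=
  (forall x y, adj x y -> adj y x) /\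
  (forall x, ~ adj x x) /\
  (forall x y, exists l, walk adj x l y) /\
  (* no cycles: no closed walk x, l_1, ..., l_k, x with k >= 2 and
     x, l_1, ..., l_k pairwise distinct *)
  (forall x l, NoDup (x :: l) -> (2 <= length l)%nat ->
     walk adj x l (last l x) -> ~ adj (last l x) x).

Definition locally_finite {V : Type} (adj : V -> V -> Prop) : Prop :=
  forall x, exists s : list V, forall y, adj x y -> In y s.

Definition min_degree_ge3 {V : Type} (adj : V -> V -> Prop) : Prop :=
  forall x, exists a b c, adj x a /\ adj x b /\ adj x c /\
                          a <> b /\ b <> c /\ a <> c.

Definition is_ray {V : Type} (adj : V -> V -> Prop) (o : V) (z : nat -> V)
  : Prop :=
  z 0%nat = o /\
  forall i, adj (z i) (z (S i)) /\ z i <> z (S i) /\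
            z (S i) <> z (S (S i)) /\ z i <> z (S (S i)).

Definition on_geod {V : Type} (adj : V -> V -> Prop) (x y w : V) : Prop :=
  (gdist adj x w + gdist adj w y = gdist adj x y)%nat.

(* [o,y]_xi : the vertex of xi on [o,y] farthest from o *)
Definition confl {V : Type} (adj : V -> V -> Prop) (o : V) (xi : nat -> V)
  (y : V) : V :=
  epsilon (inhabits o)
    (fun w => (exists k, w = xi k) /\ on_geod adj o y w /\
              forall k, on_geod adj o y (xi k) ->
                        (gdist adj o (xi k) <= gdist adj o w)%nat).

Definition height {V : Type} (adj : V -> V -> Prop) (o : V) (g : nat -> V)
  (y : V) : Z :=
  (Z.of_nat (gdist adj y (confl adj o g y)) -
   Z.of_nat (gdist adj o (confl adj o g y)))%Z.

Definition eventually_const {T : Type} (x : nat -> T) : Prop :=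
  exists v N, forall n, (N <= n)%nat -> x n = v.

Definition nat_to_infty (a : nat -> nat) : Prop :=
  forall M, exists N, forall n, (N <= n)%nat -> (M <= a n)%nat.

(* A sequence of vertices converges in the geometric compactification
   T-bar = T u dT: vertices are isolated (so convergence to a vertex means
   being eventually constant), and x_n -> xi in dT iff d(o,[o,x_n]_xi) -> oo. *)
Definition tbar_cvg {V : Type} (adj : V -> V -> Prop) (o : V) (x : nat -> V)
  : Prop :=
  eventually_const x \/
  exists xi, is_ray adj o xi /\
             nat_to_infty (fun n => gdist adj o (confl adj o xi (x n))).

(* Convergence in the two-point compactification Zbar = Z u {+oo,-oo}. *)
Definition zbar_cvg (a : nat -> Z) : Prop :=
  eventually_const a \/
  (forall M, exists N, forall n, (N <= n)%nat -> (M <= a n)%Z) \/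
  (forall M, exists N, forall n, (N <= n)%nat -> (a n <= M)%Z).

Section Horo.
Variables (V1 V2 : Type) (adj1 : V1 -> V1 -> Prop) (adj2 : V2 -> V2 -> Prop)
  (o1 : V1) (o2 : V2) (g1 : nat -> V1) (g2 : nat -> V2).

Definition inHP (p : V1 * V2) : Prop :=
  (height adj1 o1 g1 (fst p) + height adj2 o2 g2 (snd p) = 0)%Z.

Definition HP : Type := {p : V1 * V2 | inHP p}.

Definition adjHP (p q : V1 * V2) : Prop :=
  inHP p /\ inHP q /\ adj1 (fst p) (fst q) /\ adj2 (snd p) (snd q).

Definition dHP (p q : HP) : nat := gdist adjHP (proj1_sig p) (proj1_sig q).

Definition Phi (z : HP) (y : HP) : Z :=
  (Z.of_nat (gdist adjHP (proj1_sig z) (proj1_sig y)) -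
   Z.of_nat (gdist adjHP (proj1_sig z) (o1, o2)))%Z.

(* Psi(x) = (x^1, x^2, h_1(x^1)) converges in T1bar x T2bar x Zbar
   (product topology: componentwise convergence) *)
Definition Psi_cvg (x : nat -> HP) : Prop :=
  tbar_cvg adj1 o1 (fun n => fst (proj1_sig (x n))) /\
  tbar_cvg adj2 o2 (fun n => snd (proj1_sig (x n))) /\
  zbar_cvg (fun n => height adj1 o1 g1 (fst (proj1_sig (x n)))).

(* Phi(x_n) converges in the space of real functions on the vertex set,
   with the topology of pointwise convergence *)
Definition Phi_cvg (x : nat -> HP) : Prop :=
  exists f : HP -> R, forall y : HP,
    Un_cv (fun n => IZR (Phi (x n) y)) (f y).

End Horo.

(* Main.v *)
Require Import Defs.
From Stdlib Require Import List ZArith Reals Lia Lra ClassicalEpsilon Classical.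
Import ListNotations.

Lemma nat_min_ex (P : nat -> Prop) : (exists n, P n) -> exists n, P n /\ forall m, P m -> (n <= m)%nat.
Proof.
  intros [n Hn]. revert Hn. induction n as [n IH] using (well_founded_induction lt_wf).
  intros Hn.
  destruct (classic (exists m, (m < n)%nat /\ P m)) as [[m [Hm Pm]]|H].
  - apply (IH m Hm Pm).
  - exists n; split; auto. intros m Pm. destruct (Nat.lt_ge_cases m n); auto.
    exfalso; eauto.
Qed.

Lemma gdist_spec {V : Type} (adj : V -> V -> Prop) x y :
  (exists l, walk adj x l y) ->
  (exists l, walk adj x l y /\ length l = gdist adj x y) /\
  (forall l, walk adj x l y -> (gdist adj x y <= length l)%nat).
Proof.
  intros Hex. unfold gdist. apply epsilon_spec.
  destruct Hex as [l Hl].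
  destruct (nat_min_ex (fun n => exists l, walk adj x l y /\ length l = n)) as [n [[l' [H1 H2]] Hmin]].
  { eauto. }
  exists n. split. eauto. intros l0 Hl0. apply Hmin. eauto.
Qed.

Lemma walk_app {V : Type} (adj : V -> V -> Prop) x l1 y l2 z :
  walk adj x l1 y -> walk adj y l2 z -> walk adj x (l1 ++ l2) z.
Proof.
  revert x; induction l1; simpl; intros x H1 H2.
  - subst; auto.
  - destruct H1; split; eauto.
Qed.

Section Tree.
Variable V : Type.
Variable adj : V -> V -> Prop.
Hypothesis Ht : is_tree adj.
Local Open Scope Z_scope.

Definition D (x y : V) : Z := Z.of_nat (gdist adj x y).

Lemma adj_sym x y : adj x y -> adj y x.
Proof. destruct Ht as [H _]; auto. Qed.

Lemma adj_irr x : ~ adj x x.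
Proof. destruct Ht as [_ [H _]]; auto. Qed.

Lemma adj_neq x y : adj x y -> x <> y.
Proof. intros H E; subst; apply (adj_irr y H). Qed.

Lemma conn x y : exists l, walk adj x l y.
Proof. destruct Ht as [_ [_ [H _]]]; auto. Qed.

Lemma D_spec1 x y : exists l, walk adj x l y /\ Z.of_nat (length l) = D x y.
Proof.
  destruct (gdist_spec adj x y (conn x y)) as [[l [H1 H2]] _].
  exists l; split; auto. unfold D; rewrite H2; auto.
Qed.

Lemma D_min x y l : walk adj x l y -> D x y <= Z.of_nat (length l).
Proof.
  intros H. destruct (gdist_spec adj x y (conn x y)) as [_ H2].
  unfold D. specialize (H2 l H). lia.
Qed.

Lemma D_nonneg x y : 0 <= D x y.
Proof. unfold D; lia. Qed.

Lemma walk_rev l : forall x y, walk adj x l y -> exists l', walk adj y l' x /\ length l' = length l.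
Proof.
  induction l as [|a l IH]; simpl; intros x y H.
  - subst; exists []; simpl; auto.
  - destruct H as [Ha Hw]. destruct (IH _ _ Hw) as [l' [H1 H2]].
    exists (l' ++ [x]). split.
    + apply walk_app with a; auto. simpl. split; auto. apply adj_sym; auto.
    + rewrite length_app; simpl; lia.
Qed.

Lemma D_sym x y : D x y = D y x.
Proof.
  assert (forall x y, D y x <= D x y).
  { intros a b. destruct (D_spec1 a b) as [l [H1 H2]].
    destruct (walk_rev l a b H1) as [l' [H3 H4]].
    pose proof (D_min _ _ _ H3). rewrite H4 in H. lia. }
  pose proof (H x y); pose proof (H y x); lia.
Qed.

Lemma D_tri x y z : D x z <= D x y + D y z.
Proof.
  destruct (D_spec1 x y) as [l1 [H1 E1]].
  destruct (D_spec1 y z) as [l2 [H2 E2]].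
  pose proof (D_min _ _ _ (walk_app adj _ _ _ _ _ H1 H2)).
  rewrite length_app in H. lia.
Qed.

Lemma D_refl x : D x x = 0.
Proof.
  pose proof (D_min x x [] eq_refl). simpl in H. pose proof (D_nonneg x x). lia.
Qed.

Lemma D_eq0 x y : D x y = 0 -> x = y.
Proof.
  intros H. destruct (D_spec1 x y) as [l [H1 H2]].
  destruct l; simpl in *; auto. lia.
Qed.

Lemma D_adj x y : adj x y -> D x y = 1.
Proof.
  intros H. pose proof (D_min x y [y] (conj H eq_refl)). simpl in H0.
  assert (D x y <> 0). { intro E. apply D_eq0 in E. subst. apply (adj_irr y H). }
  pose proof (D_nonneg x y). lia.
Qed.

Lemma D_step x y : 0 < D x y -> exists z, adj x z /\ D z y = D x y - 1.
Proof.
  intros Hp. destruct (D_spec1 x y) as [l [H1 H2]].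
  destruct l as [|z l]; simpl in *. lia.
  destruct H1 as [Ha Hw]. exists z; split; auto.
  pose proof (D_min _ _ _ Hw). pose proof (D_tri x z y). rewrite (D_adj _ _ Ha) in H0. lia.
Qed.

Lemma desc_path n : forall x w, D x w = Z.of_nat n -> exists a : nat -> V, a 0%nat = x /\
  (forall i, (i < n)%nat -> adj (a i) (a (S i))) /\
  (forall i, (i <= n)%nat -> D (a i) w = Z.of_nat (n - i)).
Proof.
  induction n as [|n IH]; intros x w H.
  - exists (fun _ => x). split; auto. split. intros; lia. intros i Hi.
    assert (i = 0%nat) by lia. subst. simpl. auto.
  - destruct (D_step x w) as [z [Hz Ez]]. lia.
    destruct (IH z w) as [b [B0 [B1 B2]]]. lia.
    exists (fun i => match i with 0%nat => x | S i => b i end). split; auto. split.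
    + intros [|i] Hi. rewrite B0; auto. apply B1; lia.
    + intros [|i] Hi. rewrite H. f_equal. rewrite B2 by lia. f_equal.
Qed.

Lemma walk_seq (c : nat -> V) k : forall s, (forall i, (s <= i < s + k)%nat -> adj (c i) (c (S i))) ->
  walk adj (c s) (map c (seq (S s) k)) (c (s + k)%nat).
Proof.
  induction k as [|k IH]; intros s H; simpl.
  - f_equal; lia.
  - split. apply H; lia. replace (s + S k)%nat with (S s + k)%nat by lia. apply IH.
    intros i Hi; apply H; lia.
Qed.

Lemma no_cycle (c : nat -> V) (m : nat) : (2 <= m)%nat ->
  (forall i, (i < m)%nat -> adj (c i) (c (S i))) ->
  (forall i k, (i <= m)%nat -> (k <= m)%nat -> c i = c k -> i = k) ->
  ~ adj (c m) (c 0%nat).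
Proof.
  intros Hm Ha Hi.
  destruct Ht as [_ [_ [_ Hc]]].
  assert (Hl : last (map c (seq 1 m)) (c 0%nat) = c m).
  { destruct m. lia. rewrite seq_S, map_app. simpl. rewrite last_last. f_equal. }
  pose proof (Hc (c 0%nat) (map c (seq 1 m))). rewrite Hl in H. apply H.
  - change (c 0%nat :: map c (seq 1 m)) with (map c (seq 0 (S m))).
    apply NoDup_map_NoDup_ForallPairs. 2: apply seq_NoDup.
    intros a b Ha' Hb' E. apply in_seq in Ha'. apply in_seq in Hb'. apply Hi; auto; lia.
  - rewrite length_map, length_seq. auto.
  - replace m with (0 + m)%nat at 2 by lia. apply walk_seq. intros; apply Ha; lia.
Qed.

Lemma merge x y w : x <> y -> D x w = D y w -> exists (c : nat -> V) (m : nat),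
  (2 <= m)%nat /\ c 0%nat = x /\ c m = y /\ (forall i, (i < m)%nat -> adj (c i) (c (S i))) /\
  (forall i k, (i <= m)%nat -> (k <= m)%nat -> c i = c k -> i = k) /\
  (forall i, (i <= m)%nat -> D (c i) w <= D x w).
Proof.
  intros Hxy E.
  destruct (D_spec1 x w) as [l0 [_ EN]].
  remember (length l0) as N eqn:EL. clear EL l0.
  destruct (desc_path N x w) as [a [A0 [A1 A2]]]. lia.
  destruct (desc_path N y w) as [b [B0 [B1 B2]]]. lia.
  assert (AN : a N = w). { apply D_eq0. rewrite A2 by lia. f_equal; lia. }
  assert (BN : b N = w). { apply D_eq0. rewrite B2 by lia. f_equal; lia. }
  destruct (nat_min_ex (fun j => (j <= N)%nat /\ a j = b j)) as [j [[Hj1 Hj2] Hjm]].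
  { exists N; split; auto; congruence. }
  assert (Hj0 : (j <> 0)%nat). { intro; subst. congruence. }
  exists (fun i => if Nat.leb i j then a i else b (2 * j - i)%nat), (2 * j)%nat.
  split. lia. split. simpl. auto. split.
  { destruct (Nat.leb_spec (2*j) j). lia. replace (2*j - 2*j)%nat with 0%nat by lia. auto. }
  split.
  { intros i Hi. destruct (Nat.leb_spec i j); destruct (Nat.leb_spec (S i) j).
    - apply A1; lia.
    - assert (i = j) by lia. subst i. rewrite Hj2.
      replace (2 * j - S j)%nat with (j - 1)%nat by lia. apply adj_sym.
      replace (b j) with (b (S (j - 1))) by (f_equal; lia). apply B1; lia.
    - lia.
    - apply adj_sym. replace (2 * j - i)%nat with (S (2 * j - S i)) by lia. apply B1; lia. }
  split.
  { intros i k Hi Hk Eik.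
    assert (Da : forall i, (i <= j)%nat -> D (a i) w = Z.of_nat (N - i)) by (intros; apply A2; lia).
    assert (Db : forall i, (j < i <= 2 * j)%nat -> D (b (2 * j - i)%nat) w = Z.of_nat (N - (2 * j - i))%nat) by (intros; apply B2; lia).
    revert Eik. destruct (Nat.leb_spec i j); destruct (Nat.leb_spec k j); intro Eik.
    - pose proof (Da i H); pose proof (Da k H0). rewrite Eik in H1. lia.
    - pose proof (Da i H); pose proof (Db k (conj H0 Hk)). rewrite Eik in H1.
      assert (i = 2 * j - k)%nat by lia. subst i.
      assert (j <= 2 * j - k)%nat. { apply Hjm. split. lia. auto. } lia.
    - pose proof (Db i (conj H Hi)); pose proof (Da k H0). rewrite Eik in H1.
      assert (k = 2 * j - i)%nat by lia. subst k.
      assert (j <= 2 * j - i)%nat. { apply Hjm. split. lia. auto. } lia.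
    - pose proof (Db i (conj H Hi)); pose proof (Db k (conj H0 Hk)). rewrite Eik in H1. lia. }
  intros i Hi. destruct (Nat.leb_spec i j).
  - rewrite A2 by lia. lia.
  - rewrite B2 by lia. lia.
Qed.

Lemma parity x y w : adj x y -> D x w <> D y w.
Proof.
  intros Ha E. destruct (merge x y w (adj_neq _ _ Ha) E) as [c [m [H1 [H2 [H3 [H4 [H5 _]]]]]]].
  apply (no_cycle c m H1 H4 H5). rewrite H2, H3. apply adj_sym; auto.
Qed.

Lemma adj_diff x y w : adj x y -> D y w = D x w + 1 \/ D y w = D x w - 1.
Proof.
  intros Ha. pose proof (parity x y w Ha). pose proof (D_tri x y w). pose proof (D_tri y x w).
  rewrite (D_adj _ _ Ha) in H0. rewrite (D_adj _ _ (adj_sym _ _ Ha)) in H1. lia.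
Qed.

Lemma UP x u v w : adj x u -> adj x v -> D u w = D x w - 1 -> D v w = D x w - 1 -> u = v.
Proof.
  intros Hu Hv Eu Ev. apply NNPP; intro Hne.
  destruct (merge u v w Hne ltac:(lia)) as [c [m [H1 [H2 [H3 [H4 [H5 H6]]]]]]].
  set (c' := fun i => match i with 0%nat => x | S i => c i end).
  apply (no_cycle c' (S m)).
  - lia.
  - intros [|i] Hi; simpl. rewrite H2; auto. apply H4; lia.
  - intros [|i] [|k] Hi Hk E; simpl in E; auto.
    + exfalso. pose proof (H6 k ltac:(lia)). rewrite <- E in H. lia.
    + exfalso. pose proof (H6 i ltac:(lia)). rewrite E in H. lia.
    + f_equal. apply H5; auto; lia.
  - simpl. rewrite H3. apply adj_sym; auto.
Qed.


Definition P (w x y : V) : Z := D x w + D y w - D x y.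

Lemma P_le x y w : P w x y <= 2 * D y w /\ P w x y <= 2 * D x w.
Proof. unfold P. pose proof (D_tri x y w). pose proof (D_tri y x w). rewrite (D_sym y x) in H0. lia. Qed.

Lemma P_refl x w : P w x x = 2 * D x w.
Proof. unfold P. rewrite D_refl. lia. Qed.

Lemma lemK w n : forall x y y', D x y = Z.of_nat n -> adj y y' -> D y' w = D y w - 1 ->
  P w x y' = Z.min (P w x y) (2 * D y' w).
Proof.
  induction n as [n IH] using (well_founded_induction lt_wf).
  intros x y y' Hn Ha Hd.
  pose proof (P_le x y' w) as [Q1 _].
  destruct (adj_diff y y' x Ha) as [E|E]; rewrite (D_sym y' x), (D_sym y x) in E.
  2: { unfold P in *. lia. }
  destruct (Z.eq_dec (P w x y) (2 * D y w)) as [Eq|Ne].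
  { unfold P in *. lia. }
  exfalso.
  assert (Hxy : 0 < D y x).
  { destruct (Z.eq_dec (D y x) 0) as [Z0|Z0]. apply D_eq0 in Z0. subst. rewrite P_refl in Ne. lia.
    pose proof (D_nonneg y x). lia. }
  destruct (D_step y x Hxy) as [u [Hu Eu]].
  destruct (adj_diff y u w Hu) as [F|F].
  - assert (Hlt : (Z.to_nat (D x u) < n)%nat).
    { rewrite (D_sym x u), Eu. rewrite (D_sym y x) in *. lia. }
    pose proof (IH _ Hlt x u y ltac:(pose proof (D_nonneg x u); lia) (adj_sym _ _ Hu) ltac:(lia)).
    unfold P in *. rewrite (D_sym x u), Eu in H. rewrite (D_sym y x) in *. try lia.
  - assert (u = y'). { apply (UP y u y' w); auto; lia. }
    subst u. rewrite (D_sym y' x) in Eu. rewrite (D_sym y x) in *. lia.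
Qed.

Lemma K_lemma w x y y' : adj y y' -> D y' w = D y w - 1 -> P w x y' = Z.min (P w x y) (2 * D y' w).
Proof. intros. apply (lemK w (Z.to_nat (D x y))); auto. pose proof (D_nonneg x y); lia. Qed.

Lemma P_ultra_n w x y n : forall z, D y z = Z.of_nat n -> Z.min (P w x y) (P w y z) <= P w x z.
Proof.
  induction n as [|n IH]; intros z Hn.
  - simpl in Hn. apply D_eq0 in Hn. subst. lia.
  - destruct (D_step z y) as [z' [Ha Ez]]. rewrite D_sym; lia.
    rewrite (D_sym z' y), (D_sym z y) in Ez.
    pose proof (IH z' ltac:(lia)) as IH'.
    destruct (adj_diff z z' w Ha) as [F|F].
    + pose proof (K_lemma w x z' z (adj_sym _ _ Ha) ltac:(lia)).
      pose proof (K_lemma w y z' z (adj_sym _ _ Ha) ltac:(lia)).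
      unfold P in *. lia.
    + pose proof (K_lemma w x z z' Ha ltac:(lia)).
      pose proof (K_lemma w y z z' Ha ltac:(lia)).
      unfold P in *. lia.
Qed.

Lemma P_ultra w x y z : Z.min (P w x y) (P w y z) <= P w x z.
Proof. apply (P_ultra_n w x y (Z.to_nat (D y z))). pose proof (D_nonneg y z); lia. Qed.

Lemma P_even_n w n : forall x y, D x y = Z.of_nat n -> exists k, P w x y = 2 * k.
Proof.
  induction n as [|n IH]; intros x y Hn.
  - simpl in Hn. apply D_eq0 in Hn. subst. rewrite P_refl. eauto.
  - destruct (D_step x y) as [x' [Ha Ex]]. lia.
    destruct (IH x' y ltac:(lia)) as [k Hk].
    destruct (adj_diff x x' w Ha) as [F|F]; unfold P in *.
    + exists (k-1). lia.
    + exists k. lia.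
Qed.

Lemma P_even w x y : exists k, P w x y = 2 * k.
Proof. apply (P_even_n w (Z.to_nat (D x y))). pose proof (D_nonneg x y); lia. Qed.

Lemma ray_dist o xi : is_ray adj o xi -> forall m i, D (xi i) (xi (i + m)%nat) = Z.of_nat m.
Proof.
  intros [R0 R].
  assert (forall m i, D (xi i) (xi (i + m)%nat) = Z.of_nat m /\ D (xi i) (xi (i + S m)%nat) = Z.of_nat (S m)).
  { induction m as [|m IH]; intros i.
    - rewrite Nat.add_0_r, D_refl. split; auto. rewrite Nat.add_1_r. rewrite D_adj. auto. apply R.
    - destruct (IH i) as [H1 H2]. split; auto.
      destruct (R (i + m)%nat) as [Ra [Rb [Rc Rd]]].
      pose proof (R (S (i+m))) as [Ra' _].
      replace (i + S (S m))%nat with (S (S (i + m))) by lia.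
      replace (i + S m)%nat with (S (i + m)) in H2 by lia.
      destruct (adj_diff _ _ (xi i) Ra') as [F|F];
        rewrite (D_sym (xi (S (S (i+m)))) (xi i)), (D_sym (xi (S (i+m))) (xi i)) in F; rewrite F, H2. lia.
      exfalso. apply Rd. apply (UP (xi (S (i + m))) (xi (i+m)%nat) (xi (S (S (i + m)))) (xi i)).
      apply adj_sym; auto. auto. rewrite D_sym, H1, D_sym, H2. lia.
      rewrite D_sym, F, H2, D_sym, H2. lia. }
  intros m i. apply H.
Qed.


Lemma D_ray o xi : is_ray adj o xi -> forall k, D o (xi k) = Z.of_nat k.
Proof. intros R k. pose proof (ray_dist o xi R k 0). destruct R as [R0 _]. rewrite R0 in H. auto. Qed.

Lemma gdist_ray o xi : is_ray adj o xi -> forall k, gdist adj o (xi k) = k.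
Proof. intros R k. pose proof (D_ray o xi R k). unfold D in H. lia. Qed.

Lemma D_ray2 o xi : is_ray adj o xi -> forall a b, (a <= b)%nat -> D (xi a) (xi b) = Z.of_nat b - Z.of_nat a.
Proof. intros R a b Hab. pose proof (ray_dist o xi R (b - a) a). replace (a + (b - a))%nat with b in H by lia. lia. Qed.

Lemma P_ray_pair o xi : is_ray adj o xi -> forall a b, P o (xi a) (xi b) = 2 * Z.of_nat (Nat.min a b).
Proof.
  intros R a b. unfold P. rewrite !(D_sym _ o), !(D_ray o xi R).
  destruct (Nat.le_ge_cases a b).
  - rewrite (D_ray2 o xi R a b) by auto. lia.
  - rewrite D_sym, (D_ray2 o xi R b a) by auto. lia.
Qed.

Lemma P_ray o xi : is_ray adj o xi -> forall y k K, (k <= K)%nat -> P o (xi K) y = 2 * Z.of_nat K -> P o (xi k) y = 2 * Z.of_nat k.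
Proof.
  intros R y k K Hk HK. pose proof (P_ultra o (xi k) (xi K) y). rewrite P_ray_pair in H by auto.
  pose proof (P_le (xi k) y o) as [_ H2]. rewrite (D_sym _ o), (D_ray o xi R) in H2.
  rewrite HK in H. lia.
Qed.

Lemma P_o_le o y w : P o w y <= 2 * D o y.
Proof. pose proof (P_le w y o) as [H _]. rewrite D_sym. auto. Qed.

Lemma on_geod_iff o xi : is_ray adj o xi -> forall y k, on_geod adj o y (xi k) <-> P o (xi k) y = 2 * Z.of_nat k.
Proof.
  intros R y k. unfold on_geod, P. pose proof (D_ray o xi R k) as E.
  rewrite (D_sym (xi k) o), (D_sym y o). unfold D in *. split; intros; lia.
Qed.

Lemma confl_spec o xi : is_ray adj o xi -> forall y, exists K, confl adj o xi y = xi K /\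
  P o (xi K) y = 2 * Z.of_nat K /\ forall k, P o (xi k) y = 2 * Z.of_nat k -> (k <= K)%nat.
Proof.
  intros R y.
  set (Q := fun k => P o (xi k) y = 2 * Z.of_nat k).
  assert (Qb : forall k, Q k -> (k <= Z.to_nat (D o y))%nat).
  { intros k Hk. unfold Q in Hk. pose proof (P_o_le o y (xi k)). lia. }
  destruct (nat_min_ex (fun m => forall k, Q k -> (k <= m)%nat)) as [K [HK HKm]]. eauto.
  assert (QK : Q K).
  { destruct K as [|K'].
    - unfold Q, P. destruct R as [R0 _]. rewrite R0, D_refl, D_sym. lia.
    - apply NNPP. intro NQ.
      assert (forall k, Q k -> (k <= K')%nat).
      { intros k Hk. pose proof (HK k Hk). destruct (Nat.eq_dec k (S K')). subst; contradiction. lia. }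
      pose proof (HKm K' H). lia. }
  assert (Hw : exists w, (exists k, w = xi k) /\ on_geod adj o y w /\
     forall k, on_geod adj o y (xi k) -> (gdist adj o (xi k) <= gdist adj o w)%nat).
  { exists (xi K). split. eauto. split. apply on_geod_iff; auto.
    intros k Hk. apply on_geod_iff in Hk; auto. rewrite !(gdist_ray o xi R). apply HK; auto. }
  pose proof (epsilon_spec (inhabits o) _ Hw) as [[k' Ek'] [G1 G2]].
  fold (confl adj o xi y) in Ek', G1, G2.
  rewrite Ek' in G1, G2. apply on_geod_iff in G1; auto.
  pose proof (HK k' G1).
  assert (on_geod adj o y (xi K)) by (apply on_geod_iff; auto).
  pose proof (G2 K H0). rewrite !(gdist_ray o xi R) in H1.
  assert (k' = K) by lia. subst k'.
  exists K. split; auto.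
Qed.

Lemma confl_ge o xi : is_ray adj o xi -> forall y M,
  (M <= gdist adj o (confl adj o xi y))%nat <-> P o (xi M) y = 2 * Z.of_nat M.
Proof.
  intros R y M. destruct (confl_spec o xi R y) as [K [E [HK Hm]]].
  rewrite E, (gdist_ray o xi R). split; intros H.
  - apply (P_ray o xi R y M K); auto.
  - apply Hm; auto.
Qed.


Section Height.
Variable o : V.
Variable g : nat -> V.
Hypothesis Hg : is_ray adj o g.

Definition h (y : V) : Z := height adj o g y.
Definition G (x y : V) : Z := h x + h y - D x y.

Lemma height_K y : exists K, P o (g K) y = 2 * Z.of_nat K /\
  (forall k, P o (g k) y = 2 * Z.of_nat k -> (k <= K)%nat) /\ h y = D o y - 2 * Z.of_nat K.
Proof.
  destruct (confl_spec o g Hg y) as [K [E [HK Hm]]].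
  exists K. split; auto. split; auto.
  unfold h, height. rewrite E. fold (D y (g K)). fold (D o (g K)).
  rewrite (D_ray o g Hg). unfold P in HK. rewrite (D_sym (g K) o), (D_ray o g Hg), (D_sym y o) in HK.
  rewrite (D_sym y). lia.
Qed.

Lemma height_far y k : D o y <= Z.of_nat k -> h y = D y (g k) - Z.of_nat k.
Proof.
  intros Hk. destruct (height_K y) as [K [HK [Hm Hh]]].
  assert (KD : (Z.of_nat K <= D o y)). { pose proof (P_o_le o y (g K)). lia. }
  assert (Kk : (K <= k)%nat) by lia.
  assert (E : P o (g k) y = 2 * Z.of_nat K).
  { pose proof (P_ultra o (g k) (g K) y). rewrite P_ray_pair, HK in H by auto.
    rewrite Nat.min_r in H by auto.
    destruct (Z.eq_dec (P o (g k) y) (2 * Z.of_nat K)) as [e|ne]; auto. exfalso.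
    assert (Kk' : (K < k)%nat). { destruct (Nat.eq_dec K k). subst. pose proof (P_le (g k) y o) as [_ H2].
       rewrite (D_sym _ o), (D_ray o g Hg) in H2. lia. lia. }
    pose proof (P_ultra o (g (S K)) (g k) y). rewrite P_ray_pair in H0 by auto.
    rewrite Nat.min_l in H0 by lia.
    destruct (P_even o (g (S K)) y) as [j Hj].
    pose proof (P_le (g (S K)) y o) as [_ H2]. rewrite (D_sym _ o), (D_ray o g Hg) in H2.
    assert (P o (g (S K)) y = 2 * Z.of_nat (S K)) by lia.
    pose proof (Hm _ H1). lia. }
  unfold P in E. rewrite (D_sym (g k) o), (D_ray o g Hg), (D_sym y o) in E. rewrite (D_sym y (g k)). lia.
Qed.

Lemma h_o : h o = 0.
Proof. rewrite (height_far o 0). destruct Hg as [R0 _]. rewrite R0, D_refl. lia. rewrite D_refl. lia. Qed.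

Lemma h_g k : h (g k) = - Z.of_nat k.
Proof. rewrite (height_far (g k) k). rewrite D_refl. lia. rewrite (D_ray o g Hg). lia. Qed.

Lemma D_far x k : D o x <= Z.of_nat k -> D x (g k) = h x + Z.of_nat k.
Proof. intros. rewrite (height_far x k); auto. lia. Qed.

Lemma G_P x y k : D o x <= Z.of_nat k -> D o y <= Z.of_nat k -> P (g k) x y = G x y + 2 * Z.of_nat k.
Proof. intros. unfold P, G. rewrite (D_far x k), (D_far y k); auto. lia. Qed.

Lemma G_ultra x y z : Z.min (G x y) (G y z) <= G x z.
Proof.
  set (k := Z.to_nat (D o x + D o y + D o z)).
  pose proof (D_nonneg o x); pose proof (D_nonneg o y); pose proof (D_nonneg o z).
  pose proof (P_ultra (g k) x y z). rewrite !(G_P _ _ k) in H2 by (unfold k; lia). lia.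
Qed.

Lemma G_even x y : exists j, G x y = 2 * j.
Proof.
  set (k := Z.to_nat (D o x + D o y)).
  pose proof (D_nonneg o x); pose proof (D_nonneg o y).
  destruct (P_even (g k) x y) as [j Hj]. rewrite (G_P _ _ k) in Hj by (unfold k; lia).
  exists (j - Z.of_nat k). lia.
Qed.

Lemma G_le x y : G x y <= 2 * h y /\ G x y <= 2 * h x.
Proof. unfold G. pose proof (D_nonneg x y). split.
  - set (k := Z.to_nat (D o x + D o y)).
    pose proof (D_nonneg o x); pose proof (D_nonneg o y).
    pose proof (P_le x y (g k)) as [H2 _]. rewrite (G_P _ _ k) in H2 by (unfold k; lia).
    rewrite (D_far y k) in H2 by (unfold k; lia). unfold G in H2. lia.
  - set (k := Z.to_nat (D o x + D o y)).
    pose proof (D_nonneg o x); pose proof (D_nonneg o y).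
    pose proof (P_le x y (g k)) as [_ H2]. rewrite (G_P _ _ k) in H2 by (unfold k; lia).
    rewrite (D_far x k) in H2 by (unfold k; lia). unfold G in H2. lia.
Qed.

Lemma G_refl x : G x x = 2 * h x.
Proof. unfold G. rewrite D_refl. lia. Qed.

Lemma G_sym x y : G x y = G y x.
Proof. unfold G. rewrite D_sym. lia. Qed.

Lemma h_adj x y : adj x y -> h y = h x + 1 \/ h y = h x - 1.
Proof.
  intros Ha. set (k := Z.to_nat (D o x + 1)).
  pose proof (D_nonneg o x). pose proof (D_tri o x y). rewrite (D_adj _ _ Ha) in H0.
  destruct (adj_diff x y (g k) Ha); rewrite !(D_far _ k) in H1 by (unfold k; lia); lia.
Qed.

Lemma G_adj x y : adj x y -> G x y = 2 * Z.min (h x) (h y).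
Proof. intros Ha. unfold G. rewrite (D_adj _ _ Ha). destruct (h_adj x y Ha); lia. Qed.

Lemma G_eq_D x y : G x y = 2 * h x -> G x y = 2 * h y -> x = y.
Proof. unfold G; intros. apply D_eq0. lia. Qed.

Lemma parent_ex x : exists u, adj x u /\ h u = h x - 1.
Proof.
  set (k := Z.to_nat (D o x + 1)). pose proof (D_nonneg o x).
  assert (0 < D x (g k)).
  { destruct (Z.eq_dec (D x (g k)) 0). apply D_eq0 in e. pose proof (D_ray o g Hg k) as H1. rewrite <- e in H1. unfold k in H1. lia.
    pose proof (D_nonneg x (g k)). lia. }
  destruct (D_step x (g k) H0) as [u [Ha Eu]]. exists u. split; auto.
  pose proof (D_tri o x u). rewrite (D_adj _ _ Ha) in H1.
  rewrite (D_far u k) in Eu by (unfold k; lia). rewrite (D_far x k) in Eu by (unfold k; lia). lia.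
Qed.

Lemma parent_uniq x u v : adj x u -> adj x v -> h u = h x - 1 -> h v = h x - 1 -> u = v.
Proof.
  intros Hu Hv Eu Ev. pose proof (G_ultra u x v). rewrite (G_adj _ _ (adj_sym _ _ Hu)), (G_adj _ _ Hv) in H.
  pose proof (G_le u v) as [H1 H2]. apply G_eq_D; lia.
Qed.

Lemma child_ex (Hd : min_degree_ge3 adj) x v : exists u, adj x u /\ h u = h x + 1 /\ u <> v.
Proof.
  destruct (Hd x) as [a [b [c [Ha [Hb [Hc [Hab [Hbc Hac]]]]]]]].
  assert (two : forall p q, adj x p -> adj x q -> p <> q -> h p = h x - 1 -> h q = h x - 1 -> False).
  { intros p q Hp Hq N Ep Eq. apply N. apply (parent_uniq x p q); auto. }
  assert (pick2 : forall p q, adj x p -> adj x q -> p <> q -> h p = h x + 1 -> h q = h x + 1 ->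
     exists u, adj x u /\ h u = h x + 1 /\ u <> v).
  { intros p q Hp Hq N Ep Eq. destruct (classic (p = v)). subst. exists q; auto. exists p; auto. }
  destruct (h_adj x a Ha) as [Ea|Ea]; destruct (h_adj x b Hb) as [Eb|Eb]; destruct (h_adj x c Hc) as [Ec|Ec].
  all: first [ apply (pick2 a b); now auto | apply (pick2 a c); now auto | apply (pick2 b c); now auto
             | exfalso; apply (two a b); now auto | exfalso; apply (two a c); now auto | exfalso; apply (two b c); now auto ].
Qed.

Lemma child_toward x y : G x y = 2 * h x -> x <> y -> exists u, adj x u /\ h u = h x + 1 /\ G u y = 2 * h u.
Proof.
  intros E Ne. assert (0 < D x y). { destruct (Z.eq_dec (D x y) 0). apply D_eq0 in e; contradiction. pose proof (D_nonneg x y); lia. }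
  destruct (D_step x y H) as [u [Ha Eu]]. exists u. split; auto.
  pose proof (G_le u y) as [_ H2]. unfold G in *.
  destruct (h_adj x u Ha); lia.
Qed.


Definition Up (c x : V) : Prop := G x c = 2 * h c.

Lemma P_o_G a b : P o a b = G a b - G a o - G b o.
Proof. unfold P, G. rewrite h_o, !(D_sym _ o). lia. Qed.

Lemma G_gg a b : G (g a) (g b) = - 2 * Z.of_nat (Nat.max a b).
Proof.
  unfold G. rewrite !h_g. destruct (Nat.le_ge_cases a b).
  - rewrite (D_ray2 o g Hg a b) by auto. lia.
  - rewrite D_sym, (D_ray2 o g Hg b a) by auto. lia.
Qed.

Lemma G_go a : G (g a) o = - 2 * Z.of_nat a.
Proof. destruct Hg as [R0 _]. rewrite <- R0. rewrite G_gg. lia. Qed.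

Lemma G_sib p c c' : adj p c -> adj p c' -> h c = h p + 1 -> h c' = h p + 1 -> c <> c' -> G c c' = 2 * h p.
Proof.
  intros Hc Hc' Ec Ec' N. pose proof (G_ultra c p c'). rewrite (G_adj _ _ (adj_sym _ _ Hc)), (G_adj _ _ Hc') in H.
  pose proof (G_le c c') as [H1 H2]. destruct (G_even c c') as [j Hj].
  assert (G c c' <> 2 * h c). { intro E. apply N. apply G_eq_D; lia. }
  lia.
Qed.

Lemma Up_sib p c c' x : adj p c -> adj p c' -> h c = h p + 1 -> h c' = h p + 1 -> c <> c' ->
  (Up c x -> G x c - G x c' = 2) /\ (~ Up c x -> G x c - G x c' <= 0).
Proof.
  intros Hc Hc' Ec Ec' N. pose proof (G_sib p c c' Hc Hc' Ec Ec' N) as S. unfold Up. split; intros U.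
  - pose proof (G_ultra x c c'). pose proof (G_ultra c x c'). rewrite G_sym in H0 at 1.
    pose proof (G_even x c') as [j Hj]. lia.
  - pose proof (G_ultra x c c'). pose proof (G_le x c) as [H1 _]. pose proof (G_even x c) as [j Hj]. lia.
Qed.

Lemma Up_disj p c c' x : adj p c -> adj p c' -> h c = h p + 1 -> h c' = h p + 1 -> c <> c' ->
  Up c x -> Up c' x -> False.
Proof.
  intros Hc Hc' Ec Ec' N U U'.
  pose proof (proj1 (Up_sib p c c' x Hc Hc' Ec Ec' N) U).
  pose proof (proj1 (Up_sib p c' c x Hc' Hc Ec' Ec (not_eq_sym N)) U'). lia.
Qed.

Lemma Up_trans p c x : Up p c -> Up c x -> Up p x.
Proof.
  unfold Up. intros H1 H2. pose proof (G_ultra x c p). pose proof (G_le c p) as [_ H3].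
  pose proof (G_le x p) as [H4 _]. lia.
Qed.

Lemma Up_child c u : adj c u -> h u = h c + 1 -> Up c u.
Proof. intros Ha E. unfold Up. rewrite G_sym, (G_adj _ _ Ha). lia. Qed.

Lemma Up_refl c : Up c c.
Proof. unfold Up. apply G_refl. Qed.

Lemma Up_step c x : Up c x -> x <> c -> exists u, adj c u /\ h u = h c + 1 /\ Up u x.
Proof.
  unfold Up. intros U N. rewrite G_sym in U. destruct (child_toward c x U (not_eq_sym N)) as [u [H1 [H2 H3]]].
  exists u. split; auto. split; auto. rewrite G_sym; auto.
Qed.

Lemma notUp_g k x : ~ Up (g k) x -> P o (g (S k)) x = 2 * Z.of_nat (S k).
Proof.
  unfold Up. intros U. rewrite h_g in U.
  pose proof (G_le x (g k)) as [H1 _]. rewrite h_g in H1.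
  destruct (G_even x (g k)) as [j Hj].
  pose proof (G_ultra x (g k) (g (S k))). rewrite G_gg in H. rewrite Nat.max_r in H by lia.
  pose proof (G_le x (g (S k))) as [H2 _]. rewrite h_g in H2.
  pose proof (G_ultra x o (g k)). pose proof (G_go k). pose proof (G_sym o (g k)).
  pose proof (G_ultra x (g (S k)) o). pose proof (G_go (S k)). pose proof (G_sym (g (S k)) o).
  rewrite P_o_G, (G_sym (g (S k)) x). lia.
Qed.

End Height.

Definition evt (Q : nat -> Prop) : Prop := exists N, forall n, (N <= n)%nat -> Q n.

Lemma evt_and (Q1 Q2 : nat -> Prop) : evt Q1 -> evt Q2 -> evt (fun n => Q1 n /\ Q2 n).
Proof. intros [N1 H1] [N2 H2]. exists (N1 + N2)%nat. intros n Hn. split; [apply H1|apply H2]; lia. Qed.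

Lemma evt_mono (Q1 Q2 : nat -> Prop) : evt Q1 -> (forall n, Q1 n -> Q2 n) -> evt Q2.
Proof. intros [N H] HQ. exists N. auto. Qed.

Lemma evt_list (R : V -> nat -> Prop) (s : list V) (Q : V -> Prop) :
  (forall u, In u s -> Q u -> evt (R u)) -> evt (fun n => forall u, In u s -> Q u -> R u n).
Proof.
  induction s as [|a s IH]; intros H.
  - exists 0%nat. intros n _ u [].
  - assert (E1 : evt (fun n => Q a -> R a n)).
    { destruct (classic (Q a)) as [q|nq]. destruct (H a (or_introl eq_refl) q) as [N HN]. exists N; auto.
      exists 0%nat. intros; contradiction. }
    pose proof (evt_and _ _ E1 (IH (fun u Hu Hq => H u (or_intror Hu) Hq))).
    apply (evt_mono _ _ H0). intros n [A B] u [E|Hu] Hq; subst; auto.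
Qed.

Lemma busemann_evt o x : tbar_cvg adj o x -> forall y, exists v, evt (fun n => D (x n) y - D (x n) o = v).
Proof.
  intros [[v [N HN]] | [xi [R Hc]]] y.
  - exists (D v y - D v o). exists N. intros n Hn. rewrite HN; auto.
  - set (M := S (Z.to_nat (D o y))).
    destruct (Hc M) as [N HN].
    exists (D y o - P o (xi M) y). exists N. intros n Hn.
    pose proof (HN n Hn) as H. apply (confl_ge o xi R) in H.
    pose proof (P_ultra o (x n) (xi M) y). pose proof (P_ultra o (xi M) (x n) y).
    pose proof (P_o_le o y (xi M)). pose proof (D_nonneg o y).
    assert (Ps : forall a b, P o a b = P o b a) by (intros a b; unfold P; rewrite (D_sym a b); lia).
    pose proof (Ps (x n) (xi M)). assert (Z.of_nat M = D o y + 1) by (unfold M; lia).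
    assert (P o (x n) y = P o (xi M) y) by lia. clearbody M.
    unfold P in H6 |- *. lia.
Qed.


Section TC.
Variable o : V.
Variable g : nat -> V.
Hypothesis Hg : is_ray adj o g.
Hypothesis Hl : locally_finite adj.
Variable x : nat -> V.
Hypothesis Hdich : forall c, evt (fun n => Up o g c (x n)) \/ evt (fun n => ~ Up o g c (x n)).

Lemma tc_caseB1 c : evt (fun n => Up o g c (x n)) ->
  (forall u, adj c u -> h o g u = h o g c + 1 -> ~ evt (fun n => Up o g u (x n))) ->
  eventually_const x.
Proof.
  intros Hc Hch. destruct (Hl c) as [s Hs].
  assert (E : evt (fun n => forall u, In u s -> (adj c u /\ h o g u = h o g c + 1) -> ~ Up o g u (x n))).
  { apply evt_list. intros u _ [Ha Eh]. destruct (Hdich u) as [e|e]; auto. exfalso; apply (Hch u Ha Eh e). }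
  destruct (evt_and _ _ Hc E) as [N HN]. exists c, N. intros n Hn.
  destruct (HN n Hn) as [U1 U2]. apply NNPP. intro Ne.
  destruct (Up_step o g Hg c (x n) U1 Ne) as [u [Ha [Eh Uu]]].
  apply (U2 u (Hs u Ha) (conj Ha Eh) Uu).
Qed.

Section B2.
Hypothesis HB2 : forall c, evt (fun n => Up o g c (x n)) ->
  exists u, adj c u /\ h o g u = h o g c + 1 /\ evt (fun n => Up o g u (x n)).
Variable k0 : nat.
Hypothesis Hk0 : evt (fun n => Up o g (g k0) (x n)).
Hypothesis Hk0m : forall k, evt (fun n => Up o g (g k) (x n)) -> (k0 <= k)%nat.

Definition next (c : V) : V := epsilon (inhabits o)
  (fun u => adj c u /\ h o g u = h o g c + 1 /\ evt (fun n => Up o g u (x n))).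

Definition chain (m : nat) : V := Nat.iter m next (g k0).

Lemma next_spec c : evt (fun n => Up o g c (x n)) ->
  adj c (next c) /\ h o g (next c) = h o g c + 1 /\ evt (fun n => Up o g (next c) (x n)).
Proof. intros H. unfold next. apply epsilon_spec. apply HB2; auto. Qed.

Lemma chain_evt m : evt (fun n => Up o g (chain m) (x n)).
Proof.
  induction m as [|m IH]. simpl. auto.
  change (chain (S m)) with (next (chain m)). apply next_spec; auto.
Qed.

Lemma chain_adj m : adj (chain m) (chain (S m)) /\ h o g (chain (S m)) = h o g (chain m) + 1.
Proof. change (chain (S m)) with (next (chain m)). destruct (next_spec _ (chain_evt m)) as [A [B _]]. auto. Qed.

Lemma chain_h m : h o g (chain m) = Z.of_nat m - Z.of_nat k0.
Proof.
  induction m as [|m IH]. simpl. rewrite (h_g o g Hg). lia.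
  rewrite (proj2 (chain_adj m)). lia.
Qed.

Lemma chain_Up d m : Up o g (chain m) (chain (m + d)%nat).
Proof.
  induction d as [|d IH]. rewrite Nat.add_0_r. apply Up_refl.
  apply (Up_trans o g Hg _ (chain (m + d)%nat)); auto.
  replace (m + S d)%nat with (S (m + d)) by lia.
  apply (Up_child o g Hg); apply chain_adj.
Qed.

Lemma chain0 : chain 0 = g k0.
Proof. reflexivity. Qed.

Lemma o_notUp1 : ~ Up o g (chain 1) o.
Proof.
  intros U. destruct (Nat.eq_dec k0 0) as [Ek|Ek].
  - unfold Up in U. rewrite chain_h in U. pose proof (G_le o g Hg o (chain 1)) as [_ H]. rewrite (h_o o g Hg) in H. lia.
  - pose proof Hg as [R0 R]. set (k := (k0 - 1)%nat).
    assert (Ek' : k0 = S k) by (unfold k; lia).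
    assert (Ne : chain 1 <> g k).
    { intro E. pose proof (Hk0m k). rewrite <- E in H. specialize (H (chain_evt 1)). lia. }
    assert (A1 : adj (g (S k)) (chain 1)). { rewrite <- Ek'. change (g k0) with (chain 0). apply chain_adj. }
    assert (A2 : adj (g (S k)) (g k)). { apply adj_sym. apply R. }
    apply (Up_disj o g Hg (g (S k)) (chain 1) (g k) o A1 A2); auto.
    + rewrite chain_h, (h_g o g Hg). lia.
    + rewrite !(h_g o g Hg). lia.
    + unfold Up. rewrite (G_sym o g), (G_go o g Hg), (h_g o g Hg). lia.
Qed.

Lemma chain_G m : G o g o (chain m) = - 2 * Z.of_nat k0.
Proof.
  pose proof (chain_Up m 0) as U0. replace (0 + m)%nat with m in U0 by lia. unfold Up in U0.
  pose proof (chain_h 0) as h0.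
  pose proof (G_ultra o g Hg o (chain 0) (chain m)) as H.
  pose proof (G_go o g Hg k0) as Gk. change (g k0) with (chain 0) in Gk.
  pose proof (G_sym o g o (chain 0)). pose proof (G_sym o g (chain 0) (chain m)).
  destruct m as [|m]. lia.
  destruct (G_even o g Hg o (chain (S m))) as [j Hj].
  destruct (Z.le_gt_cases (G o g o (chain (S m))) (- 2 * Z.of_nat k0)) as [L|L]. lia.
  exfalso. apply o_notUp1. unfold Up.
  pose proof (G_ultra o g Hg o (chain (S m)) (chain 1)).
  pose proof (chain_Up m 1) as U1. replace (1 + m)%nat with (S m) in U1 by lia. unfold Up in U1.
  pose proof (G_le o g Hg o (chain 1)) as [H4 _]. pose proof (chain_h 1). lia.
Qed.

Lemma chain_D m : D o (chain m) = Z.of_nat m + Z.of_nat k0.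
Proof. pose proof (chain_G m). unfold G in H. rewrite (h_o o g Hg), chain_h in H. lia. Qed.

Definition xi (i : nat) : V := if Nat.leb i k0 then g i else chain (i - k0).

Lemma xi_D i : D o (xi i) = Z.of_nat i.
Proof.
  unfold xi. destruct (Nat.leb_spec i k0). apply (D_ray o g Hg). rewrite chain_D. lia.
Qed.

Lemma xi_chain m : xi (k0 + m) = chain m.
Proof.
  unfold xi. destruct (Nat.leb_spec (k0 + m) k0).
  - assert (m = 0%nat) by lia. subst. rewrite Nat.add_0_r. reflexivity.
  - f_equal. lia.
Qed.

Lemma xi_ray : is_ray adj o xi.
Proof.
  assert (Nxi : forall i j, i <> j -> xi i <> xi j).
  { intros i j N E. pose proof (xi_D i). pose proof (xi_D j). rewrite E in H. lia. }
  split.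
  - unfold xi. simpl. apply Hg.
  - intros i. split; [| split; [apply Nxi; lia | split; apply Nxi; lia]].
    destruct (Nat.lt_ge_cases i k0).
    + unfold xi. destruct (Nat.leb_spec i k0); [|lia]. destruct (Nat.leb_spec (S i) k0); [|lia]. apply Hg.
    + replace i with (k0 + (i - k0))%nat by lia. replace (S (k0 + (i - k0))) with (k0 + S (i - k0))%nat by lia.
      rewrite !xi_chain. apply chain_adj.
Qed.

Lemma tc_B2 : tbar_cvg adj o x.
Proof.
  right. exists xi. split. apply xi_ray.
  intros M. destruct (chain_evt (S M)) as [N HN]. exists N. intros n Hn.
  apply (confl_ge o xi xi_ray). apply (P_ray o xi xi_ray (x n) M (k0 + S M)). lia.
  rewrite xi_chain. specialize (HN n Hn). unfold Up in HN. rewrite chain_h in HN.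
  rewrite (P_o_G o g Hg). rewrite (G_sym o g (chain (S M)) o), chain_G.
  pose proof (G_ultra o g Hg (x n) (chain (S M)) o). rewrite HN in H. rewrite (G_sym o g (chain (S M)) o), chain_G in H.
  pose proof (G_ultra o g Hg (chain (S M)) (x n) o). rewrite (G_sym o g (chain (S M)) (x n)), HN in H0.
  rewrite (G_sym o g (chain (S M)) o), chain_G in H0.
  rewrite (G_sym o g (chain (S M)) (x n)), HN. lia.
Qed.

End B2.

Lemma tree_cvg : tbar_cvg adj o x.
Proof.
  destruct (classic (forall k, evt (fun n => ~ Up o g (g k) (x n)))) as [HA|HB].
  - right. exists g. split; auto. intros M. destruct M as [|M]. exists 0%nat; lia.
    destruct (HA M) as [N HN]. exists N. intros n Hn. apply (confl_ge o g Hg). apply (notUp_g o g Hg); auto.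
  - assert (Hk : exists k, evt (fun n => Up o g (g k) (x n))).
    { apply not_all_ex_not in HB as [k Hk]. exists k. destruct (Hdich (g k)); auto; contradiction. }
    destruct (classic (exists c, evt (fun n => Up o g c (x n)) /\
       forall u, adj c u -> h o g u = h o g c + 1 -> ~ evt (fun n => Up o g u (x n)))) as [[c [Hc Hch]]|HB2].
    + left. apply (tc_caseB1 c Hc Hch).
    + assert (HB2' : forall c, evt (fun n => Up o g c (x n)) ->
         exists u, adj c u /\ h o g u = h o g c + 1 /\ evt (fun n => Up o g u (x n))).
      { intros c Hc. apply NNPP. intro NE. apply HB2. exists c. split; auto.
        intros u Ha Eh Ev. apply NE. eauto. }
      destruct (nat_min_ex _ Hk) as [k0 [Hk0 Hk0m]].
      apply (tc_B2 HB2' k0 Hk0 Hk0m).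
Qed.

End TC.

End Tree.

Section HPsec.
Variables (V1 V2 : Type) (adj1 : V1 -> V1 -> Prop) (adj2 : V2 -> V2 -> Prop)
  (o1 : V1) (o2 : V2) (g1 : nat -> V1) (g2 : nat -> V2).
Hypotheses (T1 : is_tree adj1) (T2 : is_tree adj2) (R1 : is_ray adj1 o1 g1) (R2 : is_ray adj2 o2 g2)
  (Dg1 : min_degree_ge3 adj1) (Dg2 : min_degree_ge3 adj2).

Local Open Scope Z_scope.
Local Notation h1 := (h V1 adj1 o1 g1).
Local Notation h2 := (h V2 adj2 o2 g2).
Local Notation G1 := (G V1 adj1 o1 g1).
Local Notation G2 := (G V2 adj2 o2 g2).
Local Notation D1 := (D V1 adj1).
Local Notation D2 := (D V2 adj2).
Local Notation inH := (inHP V1 V2 adj1 adj2 o1 o2 g1 g2).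
Local Notation adjH := (adjHP V1 V2 adj1 adj2 o1 o2 g1 g2).

Definition F (p q : V1 * V2) : Z := D1 (fst p) (fst q) + D2 (snd p) (snd q) - Z.abs (h1 (fst p) - h1 (fst q)).

Lemma inH_iff p : inH p <-> h1 (fst p) + h2 (snd p) = 0.
Proof. reflexivity. Qed.

Lemma G_def {V} (adj : V -> V -> Prop) o g x y : D V adj x y = h V adj o g x + h V adj o g y - G V adj o g x y.
Proof. unfold G. lia. Qed.

Ltac tfacts T R adj o g a b a' :=
  pose proof (G_ultra _ _ T _ _ R a a' b); pose proof (G_ultra _ _ T _ _ R a' a b);
  pose proof (G_le _ _ T _ _ R a b); pose proof (G_le _ _ T _ _ R a' b);
  pose proof (G_even _ _ T _ _ R a b); pose proof (G_even _ _ T _ _ R a' b);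
  pose proof (G_sym _ _ T o g a a'); pose proof (G_def adj o g a b); pose proof (G_def adj o g a' b).

Lemma F_step p p' q : adjH p p' -> inH q -> F p q <= F p' q + 1.
Proof.
  destruct p as [p1 p2], p' as [p1' p2'], q as [q1 q2].
  intros [Hp [Hp' [A1 A2]]] Hq. rewrite inH_iff in Hp, Hp', Hq. simpl in *.
  unfold F; simpl.
  pose proof (h_adj _ _ T1 _ _ R1 _ _ A1). pose proof (G_adj _ _ T1 _ _ R1 _ _ A1).
  pose proof (G_adj _ _ T2 _ _ R2 _ _ A2).
  tfacts T1 R1 adj1 o1 g1 p1 q1 p1'. tfacts T2 R2 adj2 o2 g2 p2 q2 p2'.
  repeat match goal with H : exists _, _ |- _ => destruct H end.
  repeat match goal with H : _ /\ _ |- _ => destruct H end.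
  repeat match goal with H : D _ _ _ _ = _ |- _ => rewrite H; clear H end.
  destruct H; lia.
Qed.

Lemma F_refl p : F p p = 0.
Proof. unfold F. rewrite !D_refl by auto. lia. Qed.

Lemma F_basic p q : inH p -> inH q -> 0 <= F p q /\ (F p q = 0 -> p = q).
Proof.
  destruct p as [p1 p2], q as [q1 q2]. intros Hp Hq. rewrite inH_iff in Hp, Hq. simpl in *.
  unfold F; simpl.
  pose proof (G_le _ _ T1 _ _ R1 p1 q1). pose proof (G_le _ _ T2 _ _ R2 p2 q2).
  pose proof (G_def adj1 o1 g1 p1 q1). pose proof (G_def adj2 o2 g2 p2 q2).
  split. lia. intros E.
  assert (D1 p1 q1 = 0) by lia. assert (D2 p2 q2 = 0) by lia.
  apply (D_eq0 _ _ T1) in H3. apply (D_eq0 _ _ T2) in H4. subst; auto.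
Qed.

Ltac fin T1 R1 T2 R2 adj1 o1 g1 adj2 o2 g2 p1 q1 u1 p2 q2 u2 :=
  pose proof (G_adj _ _ T1 _ _ R1 p1 u1 ltac:(assumption));
  pose proof (G_adj _ _ T2 _ _ R2 p2 u2 ltac:(assumption));
  tfacts T1 R1 adj1 o1 g1 p1 q1 u1; tfacts T2 R2 adj2 o2 g2 p2 q2 u2;
  repeat match goal with H : exists _, _ |- _ => destruct H end;
  repeat match goal with H : _ /\ _ |- _ => destruct H end;
  repeat match goal with H : D _ _ _ _ = _ |- _ => rewrite H; clear H end;
  lia.

Lemma F_move p q : inH p -> inH q -> p <> q -> exists p', adjH p p' /\ F p' q <= F p q - 1.
Proof.
  destruct p as [p1 p2], q as [q1 q2]. intros Hp Hq Ne.
  pose proof Hp as Hp0. rewrite inH_iff in Hp, Hq. simpl in *.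
  assert (mk : forall u1 u2, adj1 p1 u1 -> adj2 p2 u2 -> h1 u1 + h2 u2 = 0 -> adjH (p1, p2) (u1, u2)).
  { intros u1 u2 A1 A2 E. split; [exact Hp0|]. split; [rewrite inH_iff; exact E|]. split; assumption. }
  unfold F; simpl.
  pose proof (G_le _ _ T1 _ _ R1 p1 q1). pose proof (G_le _ _ T2 _ _ R2 p2 q2).
  pose proof (G_even _ _ T1 _ _ R1 p1 q1). pose proof (G_even _ _ T2 _ _ R2 p2 q2).
  destruct (Z.eq_dec (G1 p1 q1) (2 * h1 p1)) as [EX|NX]; destruct (Z.eq_dec (G2 p2 q2) (2 * h2 p2)) as [EY|NY].
  - exfalso. apply Ne. apply (F_basic (p1,p2) (q1,q2)); [exact Hp0 | rewrite inH_iff; exact Hq | ].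
    unfold F; simpl. pose proof (G_def adj1 o1 g1 p1 q1). pose proof (G_def adj2 o2 g2 p2 q2). lia.
  - destruct (parent_ex _ _ T2 _ _ R2 p2) as [u2 [A2 E2]].
    destruct (classic (p1 = q1)) as [Eq|Nq].
    + destruct (child_ex _ _ T1 _ _ R1 Dg1 p1 p1) as [u1 [A1 [E1 _]]].
      exists (u1, u2). split. apply mk; auto; lia. simpl. subst q1.
      fin T1 R1 T2 R2 adj1 o1 g1 adj2 o2 g2 p1 p1 u1 p2 q2 u2.
    + destruct (child_toward _ _ T1 _ _ R1 p1 q1 EX Nq) as [u1 [A1 [E1 E1']]].
      exists (u1, u2). split. apply mk; auto; lia. simpl.
      fin T1 R1 T2 R2 adj1 o1 g1 adj2 o2 g2 p1 q1 u1 p2 q2 u2.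
  - destruct (parent_ex _ _ T1 _ _ R1 p1) as [u1 [A1 E1]].
    destruct (classic (p2 = q2)) as [Eq|Nq].
    + destruct (child_ex _ _ T2 _ _ R2 Dg2 p2 p2) as [u2 [A2 [E2 _]]].
      exists (u1, u2). split. apply mk; auto; lia. simpl. subst q2.
      fin T1 R1 T2 R2 adj1 o1 g1 adj2 o2 g2 p1 q1 u1 p2 p2 u2.
    + destruct (child_toward _ _ T2 _ _ R2 p2 q2 EY Nq) as [u2 [A2 [E2 E2']]].
      exists (u1, u2). split. apply mk; auto; lia. simpl.
      fin T1 R1 T2 R2 adj1 o1 g1 adj2 o2 g2 p1 q1 u1 p2 q2 u2.
  - destruct (Z_le_gt_dec (h1 p1) (h1 q1)).
    + destruct (parent_ex _ _ T1 _ _ R1 p1) as [u1 [A1 E1]].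
      destruct (child_ex _ _ T2 _ _ R2 Dg2 p2 p2) as [u2 [A2 [E2 _]]].
      exists (u1, u2). split. apply mk; auto; lia. simpl.
      fin T1 R1 T2 R2 adj1 o1 g1 adj2 o2 g2 p1 q1 u1 p2 q2 u2.
    + destruct (child_ex _ _ T1 _ _ R1 Dg1 p1 p1) as [u1 [A1 [E1 _]]].
      destruct (parent_ex _ _ T2 _ _ R2 p2) as [u2 [A2 E2]].
      exists (u1, u2). split. apply mk; auto; lia. simpl.
      fin T1 R1 T2 R2 adj1 o1 g1 adj2 o2 g2 p1 q1 u1 p2 q2 u2.
Qed.

Lemma F_lower l : forall p q, inH p -> inH q -> walk adjH p l q -> F p q <= Z.of_nat (length l).
Proof.
  induction l as [|p' l IH]; intros p q Hp Hq W; simpl in *.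
  - subst. rewrite F_refl. lia.
  - destruct W as [A W]. pose proof A as [_ [Hp' _]].
    pose proof (IH p' q Hp' Hq W). pose proof (F_step p p' q A Hq). lia.
Qed.

Lemma HP_walk n : forall p q, inH p -> inH q -> F p q = Z.of_nat n -> exists l, walk adjH p l q /\ length l = n.
Proof.
  induction n as [|n IH]; intros p q Hp Hq E.
  - exists []. simpl. split; auto. apply (proj2 (F_basic p q Hp Hq)). lia.
  - assert (p <> q). { intro; subst. rewrite F_refl in E. lia. }
    destruct (F_move p q Hp Hq H) as [p' [A L]].
    pose proof A as [_ [Hp' _]]. pose proof (F_step p p' q A Hq).
    destruct (IH p' q Hp' Hq ltac:(lia)) as [l [W Ln]].
    exists (p' :: l). simpl. split; auto.
Qed.

Lemma gdist_HP p q : inH p -> inH q -> Z.of_nat (gdist adjH p q) = F p q.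
Proof.
  intros Hp Hq. destruct (F_basic p q Hp Hq) as [F0 _].
  destruct (HP_walk (Z.to_nat (F p q)) p q Hp Hq ltac:(lia)) as [l [W Ln]].
  destruct (gdist_spec adjH p q (ex_intro _ l W)) as [[l' [W' Ln']] Hmin].
  pose proof (Hmin l W). pose proof (F_lower l' p q Hp Hq W'). lia.
Qed.

End HPsec.

Section Aux.
Local Open Scope Z_scope.

Lemma Un_cv_evt (u : nat -> Z) l : Un_cv (fun n => IZR (u n)) l -> exists v, evt (fun n => u n = v).
Proof.
  intros H. destruct (H (1/2)%R) as [N HN]. lra.
  exists (u N). exists N. intros n Hn.
  pose proof (HN n Hn) as A. pose proof (HN N (Nat.le_refl N)) as B. unfold R_dist in *.
  apply Rabs_def2 in A. apply Rabs_def2 in B. destruct A, B.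
  assert (C1 : (IZR (u n - u N) < IZR 1)%R) by (rewrite minus_IZR; lra).
  assert (C2 : (IZR (-1) < IZR (u n - u N))%R) by (rewrite minus_IZR; lra).
  apply lt_IZR in C1. apply lt_IZR in C2. lia.
Qed.

Lemma evt_Un_cv (u : nat -> Z) v : evt (fun n => u n = v) -> Un_cv (fun n => IZR (u n)) (IZR v).
Proof.
  intros [N HN] eps Heps. exists N. intros n Hn. rewrite HN by lia. unfold R_dist.
  rewrite Rminus_diag, Rabs_R0. auto.
Qed.

Lemma zbar_of_clamp (a : nat -> Z) : (forall b, exists v, evt (fun n => Z.abs (a n) - Z.abs (a n - b) = v)) -> zbar_cvg a.
Proof.
  intros H. destruct (H 1%Z) as [s [N1 H1]].
  pose proof (H1 N1 (Nat.le_refl _)).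
  destruct (Z_le_gt_dec 1 (a N1)) as [Pos|Neg].
  -
    destruct (classic (forall M, exists N, forall n, (N <= n)%nat -> (M <= a n)%Z)) as [Inf|NInf].
    + right; left; auto.
    + apply not_all_ex_not in NInf as [M HM]. set (t := Z.max M 1).
      destruct (H t) as [v [N2 H2]]. left.
      destruct (classic (forall n, (N1 + N2 <= n)%nat -> (t <= a n)%Z)) as [Big|NBig].
      { exfalso. apply HM. exists (N1 + N2)%nat. intros n Hn. pose proof (Big n Hn). unfold t in *. lia. }
      apply not_all_ex_not in NBig as [m Hm]. apply Classical_Prop.imply_to_and in Hm as [Hm1 Hm2].
      exists (a m), (N1 + N2)%nat. intros n Hn.
      pose proof (H1 n ltac:(lia)). pose proof (H1 m ltac:(lia)).
      pose proof (H2 n ltac:(lia)). pose proof (H2 m ltac:(lia)). unfold t in *. lia.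
  - destruct (classic (forall M, exists N, forall n, (N <= n)%nat -> (a n <= M)%Z)) as [Inf|NInf].
    + right; right; auto.
    + apply not_all_ex_not in NInf as [M HM]. set (t := Z.min M 0).
      destruct (H t) as [v [N2 H2]]. left.
      destruct (classic (forall n, (N1 + N2 <= n)%nat -> (a n <= t)%Z)) as [Big|NBig].
      { exfalso. apply HM. exists (N1 + N2)%nat. intros n Hn. pose proof (Big n Hn). unfold t in *. lia. }
      apply not_all_ex_not in NBig as [m Hm]. apply Classical_Prop.imply_to_and in Hm as [Hm1 Hm2].
      exists (a m), (N1 + N2)%nat. intros n Hn.
      pose proof (H1 n ltac:(lia)). pose proof (H1 m ltac:(lia)).
      pose proof (H2 n ltac:(lia)). pose proof (H2 m ltac:(lia)). unfold t in *. lia.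
Qed.

Lemma clamp_of_zbar (a : nat -> Z) : zbar_cvg a -> forall b, exists v, evt (fun n => Z.abs (a n) - Z.abs (a n - b) = v).
Proof.
  intros [[c [N HN]] | [Hp | Hm]] b.
  - exists (Z.abs c - Z.abs (c - b)). exists N. intros n Hn. rewrite HN; auto.
  - destruct (Hp (Z.max b 0)) as [N HN]. exists b. exists N. intros n Hn. pose proof (HN n Hn). lia.
  - destruct (Hm (Z.min b 0)) as [N HN]. exists (- b)%Z. exists N. intros n Hn. pose proof (HN n Hn). lia.
Qed.

Lemma exists_height V adj (T : is_tree adj) o g (R : is_ray adj o g) (Dg : min_degree_ge3 adj) :
  forall t, exists v, h V adj o g v = t.
Proof.
  assert (forall n : nat, exists v, h V adj o g v = Z.of_nat n).
  { induction n as [|n [v Hv]]. exists o. apply (h_o _ _ T _ _ R).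
    destruct (child_ex _ _ T _ _ R Dg v v) as [u [_ [E _]]]. exists u. lia. }
  intros t. destruct (Z_le_gt_dec 0 t).
  - destruct (H (Z.to_nat t)) as [v Hv]. exists v. lia.
  - exists (g (Z.to_nat (- t))). rewrite (h_g _ _ T _ _ R). lia.
Qed.


End Aux.

Section Main.
Variables (V1 V2 : Type) (adj1 : V1 -> V1 -> Prop) (adj2 : V2 -> V2 -> Prop)
  (o1 : V1) (o2 : V2) (g1 : nat -> V1) (g2 : nat -> V2).
Hypotheses (T1 : is_tree adj1) (T2 : is_tree adj2) (L1 : locally_finite adj1) (L2 : locally_finite adj2)
  (Dg1 : min_degree_ge3 adj1) (Dg2 : min_degree_ge3 adj2) (R1 : is_ray adj1 o1 g1) (R2 : is_ray adj2 o2 g2).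
Local Open Scope Z_scope.
Local Notation h1 := (h V1 adj1 o1 g1).
Local Notation h2 := (h V2 adj2 o2 g2).
Local Notation G1 := (G V1 adj1 o1 g1).
Local Notation G2 := (G V2 adj2 o2 g2).
Local Notation D1 := (D V1 adj1).
Local Notation D2 := (D V2 adj2).
Local Notation inH := (inHP V1 V2 adj1 adj2 o1 o2 g1 g2).
Local Notation HPt := (HP V1 V2 adj1 adj2 o1 o2 g1 g2).
Local Notation PhiF := (Phi V1 V2 adj1 adj2 o1 o2 g1 g2).

Lemma o_in : inH (o1, o2).
Proof. rewrite inH_iff. simpl. rewrite (h_o _ _ T1 _ _ R1), (h_o _ _ T2 _ _ R2). lia. Qed.

Lemma Phi_formula (z y : HPt) : PhiF z y =
  (D1 (fst (proj1_sig z)) (fst (proj1_sig y)) - D1 (fst (proj1_sig z)) o1) +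
  (D2 (snd (proj1_sig z)) (snd (proj1_sig y)) - D2 (snd (proj1_sig z)) o2) +
  (Z.abs (h1 (fst (proj1_sig z))) - Z.abs (h1 (fst (proj1_sig z)) - h1 (fst (proj1_sig y)))).
Proof.
  unfold Phi. rewrite (gdist_HP V1 V2 adj1 adj2 o1 o2 g1 g2 T1 T2 R1 R2 Dg1 Dg2 _ _ (proj2_sig z) (proj2_sig y)).
  rewrite (gdist_HP V1 V2 adj1 adj2 o1 o2 g1 g2 T1 T2 R1 R2 Dg1 Dg2 _ _ (proj2_sig z) o_in).
  unfold F. simpl. rewrite (h_o _ _ T1 _ _ R1). lia.
Qed.

Lemma mkHP (p : V1 * V2) : h1 (fst p) + h2 (snd p) = 0 -> { y : HPt | proj1_sig y = p }.
Proof. intros E. exists (exist _ p (proj2 (inH_iff V1 V2 adj1 adj2 o1 o2 g1 g2 p) E)). reflexivity. Defined.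

Variable x : nat -> HPt.
Local Notation x1 := (fun n => fst (proj1_sig (x n))).
Local Notation x2 := (fun n => snd (proj1_sig (x n))).

Lemma Psi_to_Phi : Psi_cvg V1 V2 adj1 adj2 o1 o2 g1 g2 x -> Phi_cvg V1 V2 adj1 adj2 o1 o2 g1 g2 x.
Proof.
  intros [C1 [C2 C3]].
  assert (Hy : forall y : HPt, exists v, evt (fun n => PhiF (x n) y = v)).
  { intros y.
    destruct (busemann_evt _ _ T1 o1 _ C1 (fst (proj1_sig y))) as [v1 E1].
    destruct (busemann_evt _ _ T2 o2 _ C2 (snd (proj1_sig y))) as [v2 E2].
    destruct (clamp_of_zbar _ C3 (h1 (fst (proj1_sig y)))) as [v3 E3].
    exists (v1 + v2 + v3). apply (evt_mono _ _ (evt_and _ _ (evt_and _ _ E1 E2) E3)).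
    intros n [[A B] C]. rewrite Phi_formula. simpl in *. unfold h in *. lia. }
  exists (fun y => IZR (epsilon (inhabits 0%Z) (fun v => evt (fun n => PhiF (x n) y = v)))).
  intros y. apply evt_Un_cv. apply epsilon_spec. apply Hy.
Qed.

Section Rev.
Hypothesis Hy : forall y : HPt, exists v, evt (fun n => PhiF (x n) y = v).

Lemma dich1 c : evt (fun n => Up V1 adj1 o1 g1 c (x1 n)) \/ evt (fun n => ~ Up V1 adj1 o1 g1 c (x1 n)).
Proof.
  destruct (parent_ex _ _ T1 _ _ R1 c) as [p [Ap Ep]].
  destruct (child_ex _ _ T1 _ _ R1 Dg1 p c) as [c' [Ac' [Ec' Nc']]].
  destruct (exists_height _ _ T2 _ _ R2 Dg2 (- h1 c)) as [y2 Hy2].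
  destruct (mkHP (c, y2) ltac:(simpl; lia)) as [y Ey].
  destruct (mkHP (c', y2) ltac:(simpl; lia)) as [y' Ey'].
  destruct (Hy y) as [v Ev]. destruct (Hy y') as [v' Ev'].
  pose proof (Up_sib _ _ T1 _ _ R1 p c' c) as US.
  assert (Ac : adj1 p c) by (apply (adj_sym _ _ T1); auto).
  assert (Ed : evt (fun n => G1 (x1 n) c' - G1 (x1 n) c = v - v')).
  { apply (evt_mono _ _ (evt_and _ _ Ev Ev')). intros n [A B].
    rewrite Phi_formula in A, B. rewrite Ey in A. rewrite Ey' in B. simpl in A, B.
    pose proof (G_def adj1 o1 g1 (fst (proj1_sig (x n))) c). pose proof (G_def adj1 o1 g1 (fst (proj1_sig (x n))) c'). lia. }
  destruct (Z.eq_dec (v' - v) 2) as [E2|N2].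
  - left. apply (evt_mono _ _ Ed). intros n Hn. apply NNPP. intro U.
    pose proof (proj2 (Up_sib _ _ T1 _ _ R1 p c c' (x1 n) Ac Ac' ltac:(lia) ltac:(lia) (not_eq_sym Nc')) U). lia.
  - right. apply (evt_mono _ _ Ed). intros n Hn U.
    pose proof (proj1 (Up_sib _ _ T1 _ _ R1 p c c' (x1 n) Ac Ac' ltac:(lia) ltac:(lia) (not_eq_sym Nc')) U). lia.
Qed.

Lemma dich2 c : evt (fun n => Up V2 adj2 o2 g2 c (x2 n)) \/ evt (fun n => ~ Up V2 adj2 o2 g2 c (x2 n)).
Proof.
  destruct (parent_ex _ _ T2 _ _ R2 c) as [p [Ap Ep]].
  destruct (child_ex _ _ T2 _ _ R2 Dg2 p c) as [c' [Ac' [Ec' Nc']]].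
  destruct (exists_height _ _ T1 _ _ R1 Dg1 (- h2 c)) as [y1 Hy1].
  destruct (mkHP (y1, c) ltac:(simpl; lia)) as [y Ey].
  destruct (mkHP (y1, c') ltac:(simpl; lia)) as [y' Ey'].
  destruct (Hy y) as [v Ev]. destruct (Hy y') as [v' Ev'].
  assert (Ac : adj2 p c) by (apply (adj_sym _ _ T2); auto).
  assert (Ed : evt (fun n => G2 (x2 n) c' - G2 (x2 n) c = v - v')).
  { apply (evt_mono _ _ (evt_and _ _ Ev Ev')). intros n [A B].
    rewrite Phi_formula in A, B. rewrite Ey in A. rewrite Ey' in B. simpl in A, B.
    pose proof (G_def adj2 o2 g2 (snd (proj1_sig (x n))) c). pose proof (G_def adj2 o2 g2 (snd (proj1_sig (x n))) c'). lia. }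
  destruct (Z.eq_dec (v' - v) 2) as [E2|N2].
  - left. apply (evt_mono _ _ Ed). intros n Hn. apply NNPP. intro U.
    pose proof (proj2 (Up_sib _ _ T2 _ _ R2 p c c' (x2 n) Ac Ac' ltac:(lia) ltac:(lia) (not_eq_sym Nc')) U). lia.
  - right. apply (evt_mono _ _ Ed). intros n Hn U.
    pose proof (proj1 (Up_sib _ _ T2 _ _ R2 p c c' (x2 n) Ac Ac' ltac:(lia) ltac:(lia) (not_eq_sym Nc')) U). lia.
Qed.

Lemma Phi_to_Psi_aux : Psi_cvg V1 V2 adj1 adj2 o1 o2 g1 g2 x.
Proof.
  pose proof (tree_cvg _ _ T1 _ _ R1 L1 x1 dich1) as C1.
  pose proof (tree_cvg _ _ T2 _ _ R2 L2 x2 dich2) as C2.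
  split; [exact C1|]. split; [exact C2|].
  apply zbar_of_clamp. intros b.
  destruct (exists_height _ _ T1 _ _ R1 Dg1 b) as [y1 Hy1].
  destruct (exists_height _ _ T2 _ _ R2 Dg2 (- b)) as [y2 Hy2].
  destruct (mkHP (y1, y2) ltac:(simpl; lia)) as [y Ey].
  destruct (Hy y) as [v Ev].
  destruct (busemann_evt _ _ T1 o1 _ C1 y1) as [v1 E1].
  destruct (busemann_evt _ _ T2 o2 _ C2 y2) as [v2 E2].
  exists (v - v1 - v2). apply (evt_mono _ _ (evt_and _ _ (evt_and _ _ E1 E2) Ev)).
  intros n [[A B] C]. rewrite Phi_formula in C. rewrite Ey in C. simpl in *. unfold h in *. lia.
Qed.

End Rev.
Lemma Phi_to_Psi : Phi_cvg V1 V2 adj1 adj2 o1 o2 g1 g2 x -> Psi_cvg V1 V2 adj1 adj2 o1 o2 g1 g2 x.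
Proof.
  intros [f Hf]. apply Phi_to_Psi_aux. intros y. apply (Un_cv_evt _ _ (Hf y)).
Qed.

End Main.

Theorem mainTheorem1
  (V1 V2 : Type) (adj1 : V1 -> V1 -> Prop) (adj2 : V2 -> V2 -> Prop)
  (o1 : V1) (o2 : V2) (g1 : nat -> V1) (g2 : nat -> V2)
  (T1tree : is_tree adj1) (T2tree : is_tree adj2)
  (T1lf : locally_finite adj1) (T2lf : locally_finite adj2)
  (T1deg : min_degree_ge3 adj1) (T2deg : min_degree_ge3 adj2)
  (g1ray : is_ray adj1 o1 g1) (g2ray : is_ray adj2 o2 g2) :
  forall x : nat -> HP V1 V2 adj1 adj2 o1 o2 g1 g2,
    Psi_cvg V1 V2 adj1 adj2 o1 o2 g1 g2 x <->
    Phi_cvg V1 V2 adj1 adj2 o1 o2 g1 g2 x.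
Proof.
  intros x. split.
  - apply (Psi_to_Phi V1 V2 adj1 adj2 o1 o2 g1 g2 T1tree T2tree T1deg T2deg g1ray g2ray x).
  - apply (Phi_to_Psi V1 V2 adj1 adj2 o1 o2 g1 g2 T1tree T2tree T1lf T2lf T1deg T2deg g1ray g2ray x).
Qed.
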